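(* Let $n>1$. For each $k\ge1$ the set of $N\in\mathcal{G}_n$ with $\mathbb{F}_n/N$ nilpotent of class at most $k$ is clopen, and the set $\{N\in\mathcal{G}_n:\mathbb{F}_n/N\text{ is nilpotent}\}$ is $\mathbf{\Sigma}^0_1$-complete.
   Context: $\mathbb{F}_n$ is the free group on $\gamma_1,\dots,\gamma_n$. $\mathcal{G}_n$ is the set of normal subgroups $N\trianglelefteq\mathbb{F}_n$, viewed as a subset of $\{0,1\}^{\mathbb{F}_n}$ with the subspace topology of the product of discrete topologies (a compact zero-dimensional Polish space). $\mathbf{\Sigma}^0_1$ = open sets. $A\subseteq X$ is $\mathbf{\Sigma}^0_1$-complete if it is open and for every zero-dimensional Polish space $Y$ and every open $B\subseteq Y$ there is a continuous $f:Y\to X$ with $f^{-1}[A]=B$. *)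

(* Defs.v *)
From Stdlib Require Import Reals List Bool Arith Lia.
Import ListNotations.
Open Scope R_scope.

(** * The free group F_n on gamma_0 .. gamma_{n-1} (gamma_1..gamma_n in the paper) *)

(* a letter (i, b): generator i, inverted iff b = true *)
Definition letter := (nat * bool)%type.

Definition cancels (a b : letter) : bool :=
  Nat.eqb (fst a) (fst b) && xorb (snd a) (snd b).

Fixpoint red (w : list letter) : list letter :=
  match w with
  | [] => []
  | a :: w' =>
      match red w' with
      | b :: r => if cancels a b then r else a :: b :: r
      | [] => [a]
      end
  end.

Fixpoint reducedb (w : list letter) : bool :=
  match w with
  | a :: ((b :: _) as t) => negb (cancels a b) && reducedb t
  | _ => true
  end.

Definition validb (n : nat) (w : list letter) : bool :=
  reducedb w && forallb (fun a => Nat.ltb (fst a) n) w.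

Definition FG (n : nat) : Type := { w : list letter | validb n w = true }.

Lemma reducedb_red : forall w, reducedb (red w) = true.
Proof.
  induction w as [|a w IH]; simpl; auto.
  destruct (red w) as [|b r] eqn:E; simpl; auto.
  destruct (cancels a b) eqn:C; simpl.
  - destruct r; simpl in *; auto. apply andb_prop in IH as [_ IH]; exact IH.
  - rewrite C; simpl; exact IH.
Qed.

Lemma in_red : forall w x, In x (red w) -> In x w.
Proof.
  induction w as [|a w IH]; simpl; auto.
  intros x H. destruct (red w) as [|b r] eqn:E.
  - destruct H as [H|[]]; auto.
  - destruct (cancels a b).
    + right; apply IH; simpl; auto.
    + destruct H as [H|H]; auto.
Qed.

Lemma validb_nf : forall n w,
  validb n (red (filter (fun a => Nat.ltb (fst a) n) w)) = true.
Proof.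
  intros n w. unfold validb. rewrite reducedb_red; simpl.
  apply forallb_forall. intros x Hx. apply in_red in Hx.
  apply filter_In in Hx. tauto.
Qed.

(* normal form of an arbitrary word (letters with index >= n are dropped;
   they never occur in the words we apply it to) *)
Definition nf (n : nat) (w : list letter) : FG n :=
  exist _ (red (filter (fun a => Nat.ltb (fst a) n) w)) (validb_nf n w).

Definition fg_one (n : nat) : FG n := nf n [].
Definition fg_mul {n : nat} (x y : FG n) : FG n := nf n (proj1_sig x ++ proj1_sig y).
Definition fg_inv {n : nat} (x : FG n) : FG n :=
  nf n (rev (map (fun a : letter => (fst a, negb (snd a))) (proj1_sig x))).
Definition fg_conj {n : nat} (g x : FG n) : FG n := fg_mul (fg_mul (fg_inv g) x) g.
Definition fg_comm {n : nat} (a b : FG n) : FG n :=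
  fg_mul (fg_mul (fg_inv a) (fg_inv b)) (fg_mul a b).

(** * Normal subgroups; subsets of F_n are points of {0,1}^{F_n} *)
Definition normal_sub (n : nat) (N : FG n -> bool) : Prop :=
  N (fg_one n) = true /\
  (forall x y, N x = true -> N y = true -> N (fg_mul x y) = true) /\
  (forall x, N x = true -> N (fg_inv x) = true) /\
  (forall g x, N x = true -> N (fg_conj g x) = true).

(* lcs n N i = preimage in F_n of gamma_{i+1}(F_n/N), the (i+1)-th term of the
   lower central series of F_n/N (gamma_1 = G, gamma_{j+1} = [gamma_j, G]). *)
Inductive lcs (n : nat) (N : FG n -> bool) : nat -> FG n -> Prop :=
  | lcs_top : forall x, lcs n N 0 x
  | lcs_N : forall i x, N x = true -> lcs n N i x
  | lcs_comm : forall i a b, lcs n N i a -> lcs n N (S i) (fg_comm a b)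
  | lcs_mul : forall i x y, lcs n N i x -> lcs n N i y -> lcs n N i (fg_mul x y)
  | lcs_inv : forall i x, lcs n N i x -> lcs n N i (fg_inv x).

Definition nilpotent_class_le (n : nat) (N : FG n -> bool) (k : nat) : Prop :=
  forall x, lcs n N k x -> N x = true.

Definition quotient_nilpotent (n : nat) (N : FG n -> bool) : Prop :=
  exists k, nilpotent_class_le n N k.

(** * Topology of G_n (subspace of the product {0,1}^{F_n}) *)
Definition open_G (n : nat) (A : (FG n -> bool) -> Prop) : Prop :=
  forall N, normal_sub n N -> A N ->
    exists L : list (FG n), forall N', normal_sub n N' ->
      (forall w, In w L -> N' w = N w) -> A N'.

Definition clopen_G (n : nat) (A : (FG n -> bool) -> Prop) : Prop :=
  open_G n A /\ open_G n (fun N => ~ A N).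

Definition is_metric {Y : Type} (d : Y -> Y -> R) : Prop :=
  (forall x y, 0 <= d x y) /\ (forall x y, d x y = 0 <-> x = y) /\
  (forall x y, d x y = d y x) /\ (forall x y z, d x z <= d x y + d y z).

Definition complete_metric {Y : Type} (d : Y -> Y -> R) : Prop :=
  forall u : nat -> Y,
    (forall eps, 0 < eps -> exists N, forall p q, (N <= p)%nat -> (N <= q)%nat ->
        d (u p) (u q) < eps) ->
    exists l, forall eps, 0 < eps -> exists N, forall p, (N <= p)%nat -> d (u p) l < eps.

Definition separable_metric {Y : Type} (d : Y -> Y -> R) : Prop :=
  exists s : nat -> option Y, forall y eps, 0 < eps ->
    exists m z, s m = Some z /\ d y z < eps.

Definition polish {Y : Type} (d : Y -> Y -> R) : Prop :=
  is_metric d /\ complete_metric d /\ separable_metric d.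

Definition open_in {Y : Type} (d : Y -> Y -> R) (B : Y -> Prop) : Prop :=
  forall y, B y -> exists eps, 0 < eps /\ forall z, d y z < eps -> B z.

Definition zero_dim {Y : Type} (d : Y -> Y -> R) : Prop :=
  forall y eps, 0 < eps -> exists U : Y -> Prop,
    open_in d U /\ open_in d (fun z => ~ U z) /\ U y /\
    forall z, U z -> d y z < eps.

(* continuity of f : Y -> G_n into the product of discrete {0,1}:
   each coordinate is locally constant *)
Definition continuous_to_G {Y : Type} (d : Y -> Y -> R) (n : nat)
    (f : Y -> (FG n -> bool)) : Prop :=
  (forall y, normal_sub n (f y)) /\
  (forall y w, exists eps, 0 < eps /\ forall z, d y z < eps -> f z w = f y w).

Definition Sigma01_complete_G (n : nat) (A : (FG n -> bool) -> Prop) : Prop :=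
  open_G n A /\
  forall (Y : Type) (d : Y -> Y -> R), polish d -> zero_dim d ->
    forall B : Y -> Prop, open_in d B ->
      exists f : Y -> (FG n -> bool), continuous_to_G d n f /\
        forall y, A (f y) <-> B y.

(* Main.v *)
Require Import Defs.
From Stdlib Require Import Reals List.
From Stdlib Require Import Lra Bool Arith Lia ZArith Eqdep_dec Classical ClassicalEpsilon Cantor.
Import ListNotations.

Definition push (a : letter) (s : list letter) : list letter :=
  match s with
  | b :: r => if cancels a b then r else a :: b :: r
  | [] => [a]
  end.

Lemma red_cons a w : red (a :: w) = push a (red w).
Proof. reflexivity. Qed.

Lemma red_app u v : red (u ++ v) = fold_right push (red v) u.
Proof. induction u; simpl; auto. rewrite IHu. reflexivity. Qed.

Lemma cancels_trans a b c : cancels a b = true -> cancels b c = true -> a = c.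
Proof.
  destruct a as [i x], b as [j y], c as [k z]; unfold cancels; simpl.
  intros H1 H2. apply andb_prop in H1 as [H1 H1']. apply andb_prop in H2 as [H2 H2'].
  apply Nat.eqb_eq in H1; apply Nat.eqb_eq in H2. subst.
  destruct x, y, z; simpl in *; congruence.
Qed.

Lemma reducedb_tail a s : reducedb (a :: s) = true -> reducedb s = true.
Proof. destruct s; simpl; auto. intro H; apply andb_prop in H; tauto. Qed.

Lemma push_push a b s : cancels a b = true -> reducedb s = true -> push a (push b s) = s.
Proof.
  intros Hab Hs. destruct s as [|c s']; simpl.
  - rewrite Hab; reflexivity.
  - destruct (cancels b c) eqn:Hbc.
    + assert (a = c) by (eapply cancels_trans; eauto). subst c.
      destruct s' as [|d s'']; simpl; auto.
      simpl in Hs. apply andb_prop in Hs as [Hs _].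
      destruct (cancels a d); simpl in Hs; congruence.
    + simpl. rewrite Hab. reflexivity.
Qed.

Lemma red_reduced w : reducedb w = true -> red w = w.
Proof.
  induction w as [|a w IH]; simpl; auto. intro H.
  rewrite IH by (eapply reducedb_tail; eauto).
  destruct w as [|b r]; auto. simpl in H. apply andb_prop in H as [H _].
  destruct (cancels a b); simpl in H; congruence.
Qed.

Lemma red_red w : red (red w) = red w.
Proof. apply red_reduced, reducedb_red. Qed.

Lemma red_app_r u v : red (u ++ red v) = red (u ++ v).
Proof. rewrite !red_app, red_red. reflexivity. Qed.

Lemma red_app_l u v : red (red u ++ v) = red (u ++ v).
Proof.
  induction u as [|a u IH]; [reflexivity|].
  change ((a :: u) ++ v) with (a :: (u ++ v)).
  rewrite red_cons, red_cons. rewrite <- IH.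
  destruct (red u) as [|b r] eqn:E; [reflexivity|].
  assert (P : push a (b :: r) = if cancels a b then r else a :: b :: r) by reflexivity.
  rewrite P. destruct (cancels a b) eqn:C; [|reflexivity].
  change ((b :: r) ++ v) with (b :: (r ++ v)).
  rewrite red_cons. rewrite push_push; auto. apply reducedb_red.
Qed.

Definition flip (a : letter) : letter := (fst a, negb (snd a)).
Definition winv (w : list letter) := rev (map flip w).

Lemma cancels_flip_l a : cancels (flip a) a = true.
Proof. destruct a as [i b]; unfold cancels, flip; simpl. rewrite Nat.eqb_refl; destruct b; auto. Qed.
Lemma cancels_flip_r a : cancels a (flip a) = true.
Proof. destruct a as [i b]; unfold cancels, flip; simpl. rewrite Nat.eqb_refl; destruct b; auto. Qed.

Lemma red_inv_l w : red (winv w ++ w) = [].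
Proof.
  induction w as [|a w IH]; simpl; auto.
  unfold winv in *. simpl. rewrite <- app_assoc. simpl.
  rewrite <- red_app_r. rewrite red_cons, red_cons.
  rewrite push_push by (apply cancels_flip_l || apply reducedb_red).
  rewrite red_app_r. exact IH.
Qed.

Lemma winv_invol w : winv (winv w) = w.
Proof.
  unfold winv. rewrite map_rev, rev_involutive, map_map.
  rewrite <- (map_id w) at 2. apply map_ext. intros [i b]; unfold flip; simpl; rewrite negb_involutive; auto.
Qed.

Lemma red_inv_r w : red (w ++ winv w) = [].
Proof. rewrite <- (winv_invol w) at 1. apply red_inv_l. Qed.

Definition allv n (w : list letter) := forallb (fun a => Nat.ltb (fst a) n) w = true.

Lemma filter_allv n w : allv n w -> filter (fun a => Nat.ltb (fst a) n) w = w.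
Proof.
  unfold allv; induction w; simpl; auto. intro H; apply andb_prop in H as [H1 H2].
  rewrite H1, IHw; auto.
Qed.

Lemma allv_app n u v : allv n u -> allv n v -> allv n (u ++ v).
Proof. unfold allv; intros H H0; rewrite forallb_app; apply andb_true_intro; split; assumption. Qed.

Lemma allv_winv n w : allv n w -> allv n (winv w).
Proof.
  unfold allv, winv; intro H. apply forallb_forall. intros x Hx.
  apply in_rev in Hx. apply in_map_iff in Hx as [y [<- Hy]].
  rewrite forallb_forall in H. unfold flip; simpl. apply H; auto.
Qed.

Lemma allv_of n (x : FG n) : allv n (proj1_sig x).
Proof. destruct x as [w H]; simpl. unfold validb in H; apply andb_prop in H; tauto. Qed.

Lemma reduced_of n (x : FG n) : reducedb (proj1_sig x) = true.
Proof. destruct x as [w H]; simpl. unfold validb in H; apply andb_prop in H; tauto. Qed.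

Lemma fg_eq n (x y : FG n) : proj1_sig x = proj1_sig y -> x = y.
Proof.
  destruct x as [w H], y as [w' H']; simpl; intro E; subst.
  f_equal. apply UIP_dec, bool_dec.
Qed.

Lemma nf_sig n w : allv n w -> proj1_sig (nf n w) = red w.
Proof. intro H; simpl. rewrite filter_allv; auto. Qed.

Lemma mul_sig n (x y : FG n) : proj1_sig (fg_mul x y) = red (proj1_sig x ++ proj1_sig y).
Proof. apply nf_sig, allv_app; apply allv_of. Qed.

Lemma inv_sig n (x : FG n) : proj1_sig (fg_inv x) = red (winv (proj1_sig x)).
Proof. apply nf_sig, allv_winv, allv_of. Qed.

Lemma one_sig n : proj1_sig (fg_one n) = [].
Proof. reflexivity. Qed.

Section Grp.
Variable n : nat.
Notation "x * y" := (@fg_mul n x y).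
Notation "x ^-1" := (@fg_inv n x) (at level 3).
Notation e := (fg_one n).

Lemma mulA (x y z : FG n) : x * (y * z) = (x * y) * z.
Proof.
  apply fg_eq. rewrite !mul_sig. rewrite red_app_r, red_app_l, app_assoc. reflexivity.
Qed.

Lemma mul1l (x : FG n) : e * x = x.
Proof. apply fg_eq. rewrite mul_sig. simpl. apply red_reduced, reduced_of. Qed.

Lemma mul1r (x : FG n) : x * e = x.
Proof. apply fg_eq. rewrite mul_sig. simpl. rewrite app_nil_r. apply red_reduced, reduced_of. Qed.

Lemma mulVl (x : FG n) : x^-1 * x = e.
Proof. apply fg_eq. rewrite mul_sig, inv_sig, red_app_l, red_inv_l. reflexivity. Qed.

Lemma mulVr (x : FG n) : x * x^-1 = e.
Proof. apply fg_eq. rewrite mul_sig, inv_sig, red_app_r, red_inv_r. reflexivity. Qed.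

Lemma mulKl (x y : FG n) : x^-1 * (x * y) = y.
Proof. rewrite mulA, mulVl, mul1l; auto. Qed.
Lemma mulKr (x y : FG n) : x * (x^-1 * y) = y.
Proof. rewrite mulA, mulVr, mul1l; auto. Qed.

Lemma inv_uniq (x y : FG n) : x * y = e -> x^-1 = y.
Proof. intro H. rewrite <- (mul1r (x^-1)), <- H, mulKl. auto. Qed.

Lemma invK (x : FG n) : (x^-1)^-1 = x.
Proof. apply inv_uniq. apply mulVl. Qed.

Lemma invM (x y : FG n) : (x * y)^-1 = y^-1 * x^-1.
Proof. apply inv_uniq. rewrite <- mulA, (mulA y), mulVr, mul1l, mulVr. auto. Qed.

Lemma inv1 : e^-1 = e.
Proof. apply inv_uniq, mul1l. Qed.
End Grp.

Ltac gsimpl :=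
  unfold fg_comm, fg_conj in *;
  repeat (rewrite ?invM, ?invK, ?inv1, ?mul1l, ?mul1r, ?mulA);
  repeat (rewrite <- ?mulA);
  repeat (rewrite ?mulKl, ?mulKr, ?mulVl, ?mulVr, ?mul1l, ?mul1r).
Open Scope nat_scope.
Section S.
Variable n : nat.
Implicit Types x y z g h w : FG n.
Lemma comm_mul_l z w g : fg_comm (fg_mul z w) g = fg_mul (fg_conj w (fg_comm z g)) (fg_comm w g).
Proof. gsimpl. reflexivity. Qed.
Lemma comm_inv_l z g : fg_comm (fg_inv z) g = fg_inv (fg_conj (fg_inv z) (fg_comm z g)).
Proof. gsimpl. reflexivity. Qed.
Lemma comm_conj_l z h g : fg_comm (fg_conj h z) g = fg_conj h (fg_comm z (fg_conj (fg_inv h) g)).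
Proof. gsimpl. reflexivity. Qed.
Lemma comm_mul_r z g h : fg_comm z (fg_mul g h) = fg_mul (fg_comm z h) (fg_conj h (fg_comm z g)).
Proof. gsimpl. reflexivity. Qed.
Lemma comm_inv_r z g : fg_comm z (fg_inv g) = fg_inv (fg_conj (fg_inv g) (fg_comm z g)).
Proof. gsimpl. reflexivity. Qed.
End S.
Section P1.
Variable n : nat.
Implicit Types x y z g h w : FG n.
Definition nsP (P : FG n -> Prop) : Prop :=
  P (fg_one n) /\ (forall x y, P x -> P y -> P (fg_mul x y)) /\
  (forall x, P x -> P (fg_inv x)) /\ (forall g x, P x -> P (fg_conj g x)).

Variable N : FG n -> bool.
Hypothesis HN : normal_sub n N.

Fixpoint Zc (i : nat) (z : FG n) : Prop :=
  match i with 0 => N z = true | S i => forall g, Zc i (fg_comm z g) end.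

Lemma comm_one_l g : fg_comm (fg_one n) g = fg_one n.
Proof. gsimpl. reflexivity. Qed.
Lemma comm_one_r g : fg_comm g (fg_one n) = fg_one n.
Proof. gsimpl. reflexivity. Qed.
Lemma conjK h g : fg_conj h (fg_conj (fg_inv h) g) = g.
Proof. gsimpl. reflexivity. Qed.

Lemma Zc_normal i : nsP (Zc i).
Proof.
  induction i as [|i IH].
  - destruct HN as (H1 & H2 & H3 & H4). repeat split; simpl; auto.
  - destruct IH as (H1 & H2 & H3 & H4). repeat split; simpl.
    + intro g. rewrite comm_one_l. exact H1.
    + intros x y Hx Hy g. rewrite comm_mul_l. apply H2; auto.
    + intros x Hx g. rewrite comm_inv_l. auto.
    + intros h x Hx g. rewrite comm_conj_l. auto.
Qed.

Lemma comm_as x g : fg_comm x g = fg_mul (fg_inv x) (fg_conj g x).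
Proof. gsimpl. reflexivity. Qed.

Lemma N_comm x g : N x = true -> N (fg_comm x g) = true.
Proof.
  destruct HN as (H1 & H2 & H3 & H4). intro Hx. rewrite comm_as. auto.
Qed.

Lemma Zc_mono i z : Zc i z -> Zc (S i) z.
Proof.
  revert z; induction i as [|i IH]; simpl; intros z Hz g.
  - apply N_comm; auto.
  - apply IH. apply Hz.
Qed.

Lemma Zc_N i z : N z = true -> Zc i z.
Proof. induction i; auto. intro H. apply Zc_mono; auto. Qed.
End P1.

Definition gen (n j : nat) : FG n := nf n [(j, false)].

Lemma nf_cons n a w : allv n (a :: w) -> nf n (a :: w) = fg_mul (nf n [a]) (nf n w).
Proof.
  intro H. unfold allv in H; simpl in H; apply andb_prop in H as [Ha Hw].
  apply fg_eq. rewrite mul_sig. rewrite !nf_sig; unfold allv; simpl; try rewrite Ha; auto.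
  simpl. rewrite red_red. reflexivity.
Qed.

Lemma nf_letter n j b : j < n -> nf n [(j, b)] = if b then fg_inv (gen n j) else gen n j.
Proof.
  intro Hj. destruct b; auto. apply fg_eq. rewrite inv_sig. unfold gen.
  assert (allv n [(j,true)]) by (unfold allv; simpl; rewrite (proj2 (Nat.ltb_lt j n) Hj); auto).
  assert (allv n [(j,false)]) by (unfold allv; simpl; rewrite (proj2 (Nat.ltb_lt j n) Hj); auto).
  rewrite !nf_sig; auto.
Qed.

Lemma gen_ind n (P : FG n -> Prop) :
  P (fg_one n) -> (forall x y, P x -> P y -> P (fg_mul x y)) ->
  (forall x, P x -> P (fg_inv x)) -> (forall j, j < n -> P (gen n j)) -> forall x, P x.
Proof.
  intros H1 H2 H3 H4.
  assert (forall w, allv n w -> P (nf n w)).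
  { induction w as [|[j b] w IH]; intro Hw; [exact H1|].
    rewrite nf_cons by auto. unfold allv in Hw; simpl in Hw; apply andb_prop in Hw as [Ha Hw].
    apply Nat.ltb_lt in Ha. apply H2; auto. rewrite nf_letter by auto. destruct b; auto. }
  intro x. replace x with (nf n (proj1_sig x)). apply H, allv_of.
  apply fg_eq. rewrite nf_sig by apply allv_of. apply red_reduced, reduced_of.
Qed.

Fixpoint expand (n i : nat) (c : FG n) : list (FG n) :=
  match i with
  | 0 => [c]
  | S i => flat_map (fun j => expand n i (fg_comm c (gen n j))) (seq 0 n)
  end.

Definition Lk (n k : nat) : list (FG n) := flat_map (fun j => expand n k (gen n j)) (seq 0 n).

Lemma expand_Z n N (HN : normal_sub n N) i : forall c,
  (forall d, In d (expand n i c) -> N d = true) -> Zc n N i c.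
Proof.
  induction i as [|i IH]; simpl; intros c Hc.
  - apply Hc; auto.
  - destruct (Zc_normal n N HN i) as (H1 & H2 & H3 & H4).
    apply (gen_ind n (fun g => Zc n N i (fg_comm c g))).
    + rewrite comm_one_r; auto.
    + intros x y Hx Hy. rewrite comm_mul_r. auto.
    + intros x Hx. rewrite comm_inv_r. auto.
    + intros j Hj. apply IH. intros d Hd. apply Hc. apply in_flat_map.
      exists j; split; auto. apply in_seq; lia.
Qed.

Lemma Zc_all n N (HN : normal_sub n N) k :
  (forall d, In d (Lk n k) -> N d = true) -> forall z, Zc n N k z.
Proof.
  intro H. destruct (Zc_normal n N HN k) as (H1 & H2 & H3 & H4).
  apply gen_ind; auto. intros j Hj. apply expand_Z; auto.
  intros d Hd. apply H. apply in_flat_map. exists j; split; auto. apply in_seq; lia.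
Qed.

Lemma lcs_Zc n N (HN : normal_sub n N) k (Hk : forall z, Zc n N k z) :
  forall i x, lcs n N i x -> Zc n N (k - i) x.
Proof.

  induction 1.
  - rewrite Nat.sub_0_r; auto.
  - apply Zc_N; auto.
  - destruct (Nat.lt_ge_cases i k).
    + replace (k - i) with (S (k - S i)) in IHlcs by lia. apply IHlcs.
    + replace (k - i) with 0 in IHlcs by lia. replace (k - S i) with 0 by lia.
      simpl in *. apply N_comm; auto.
  - apply (Zc_normal n N HN (k - i)); auto.
  - apply (Zc_normal n N HN (k - i)); auto.
Qed.

Lemma class_of_L n N (HN : normal_sub n N) k :
  (forall d, In d (Lk n k) -> N d = true) -> nilpotent_class_le n N k.
Proof.
  intros H x Hx. pose proof (lcs_Zc n N HN k (Zc_all n N HN k H) k x Hx) as Z.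
  rewrite Nat.sub_diag in Z. exact Z.
Qed.

Lemma expand_lcs n N i : forall m c, lcs n N m c -> forall d, In d (expand n i c) -> lcs n N (m + i) d.
Proof.
  induction i as [|i IH]; simpl; intros m c Hc d Hd.
  - destruct Hd as [<-|[]]. rewrite Nat.add_0_r; auto.
  - apply in_flat_map in Hd as [j [_ Hd]]. replace (m + S i) with (S m + i) by lia.
    apply (IH (S m) (fg_comm c (gen n j))); [apply lcs_comm; auto | auto].
Qed.

Lemma L_in n N k : nilpotent_class_le n N k -> forall d, In d (Lk n k) -> N d = true.
Proof.
  intros H d Hd. apply H. unfold Lk in Hd. apply in_flat_map in Hd as [j [_ Hd]].
  apply (expand_lcs n N k 0 (gen n j)); auto. constructor.
Qed.

Lemma open_class n k : open_G n (fun N => nilpotent_class_le n N k).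
Proof.
  intros N HN Hc. exists (Lk n k). intros N' HN' Hag.
  apply class_of_L; auto. intros d Hd. rewrite Hag; auto. apply (L_in n N k); auto.
Qed.
Open Scope nat_scope.

Section Cong.
Variable n : nat.
Variable N : FG n -> bool.
Hypothesis HN : normal_sub n N.
Definition eqN (x y : FG n) := N (fg_mul (fg_inv x) y) = true.

Lemma eqN_mul x x' y y' : eqN x x' -> eqN y y' -> eqN (fg_mul x y) (fg_mul x' y').
Proof.
  unfold eqN; intros H1 H2. destruct HN as (A1 & A2 & A3 & A4).
  replace (fg_mul (fg_inv (fg_mul x y)) (fg_mul x' y'))
    with (fg_mul (fg_conj y (fg_mul (fg_inv x) x')) (fg_mul (fg_inv y) y')) by (gsimpl; reflexivity).
  auto.
Qed.

Lemma eqN_inv x x' : eqN x x' -> eqN (fg_inv x) (fg_inv x').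
Proof.
  unfold eqN; intros H1. destruct HN as (A1 & A2 & A3 & A4).
  replace (fg_mul (fg_inv (fg_inv x)) (fg_inv x'))
    with (fg_inv (fg_conj (fg_inv x) (fg_mul (fg_inv x) x'))) by (gsimpl; reflexivity).
  auto.
Qed.

Lemma eqN_comm a a' b : eqN a a' -> eqN (fg_comm a b) (fg_comm a' b).
Proof.
  intro H. unfold fg_comm. assert (Hb : eqN b b).
  { unfold eqN. rewrite mulVl. apply HN. }
  apply eqN_mul; apply eqN_mul; auto using eqN_inv.
Qed.

Lemma lcs_one i : lcs n (fun _ => false) i (fg_one n).
Proof.
  induction i. constructor. rewrite <- (comm_one_l n (fg_one n)). apply lcs_comm; auto.
Qed.

Lemma lcs_decomp i x : lcs n N i x -> exists u, lcs n (fun _ => false) i u /\ eqN u x.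
Proof.
  induction 1.
  - exists x; split; [constructor|]. unfold eqN; rewrite mulVl; apply HN.
  - exists (fg_one n); split; [apply lcs_one|]. unfold eqN. rewrite inv1, mul1l; auto.
  - destruct IHlcs as [u [Hu Hu']]. exists (fg_comm u b); split.
    + apply lcs_comm; auto.
    + apply eqN_comm; auto.
  - destruct IHlcs1 as [u [Hu Hu']], IHlcs2 as [v [Hv Hv']]. exists (fg_mul u v); split.
    + apply lcs_mul; auto.
    + apply eqN_mul; auto.
  - destruct IHlcs as [u [Hu Hu']]. exists (fg_inv u); split.
    + apply lcs_inv; auto.
    + apply eqN_inv; auto.
Qed.
End Cong.

Lemma lcs_mono n N i u : lcs n (fun _ => false) i u -> lcs n N i u.
Proof. induction 1; try (simpl in *; discriminate). apply lcs_top. apply lcs_comm; auto. apply lcs_mul; auto. apply lcs_inv; auto. Qed.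

Lemma open_not_class n k : open_G n (fun N => ~ nilpotent_class_le n N k).
Proof.
  intros N HN Hc. unfold nilpotent_class_le in Hc.
  apply not_all_ex_not in Hc as [x Hx].
  apply imply_to_and in Hx as [Hx Nx].
  destruct (lcs_decomp n N HN k x Hx) as [u [Hu Hu']].
  assert (Nu : N u = false).
  { destruct (N u) eqn:E; auto. exfalso. apply Nx. unfold eqN in Hu'.
    replace x with (fg_mul u (fg_mul (fg_inv u) x)) by (gsimpl; reflexivity).
    apply HN; auto. }
  exists [u]. intros N' HN' Hag H. specialize (H u (lcs_mono n N' k u Hu)).
  rewrite Hag in H by (simpl; auto). congruence.
Qed.
Open Scope nat_scope.

Definition DD := (Z * bool)%type.
Definition dmul (u v : DD) : DD :=
  ((fst u + (if snd u then - fst v else fst v))%Z, xorb (snd u) (snd v)).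
Definition dinv (u : DD) : DD := (if snd u then fst u else (- fst u)%Z, snd u).
Definition done : DD := (0%Z, false).
Definition dcomm u v := dmul (dmul (dinv u) (dinv v)) (dmul u v).

Lemma dmulA u v w : dmul u (dmul v w) = dmul (dmul u v) w.
Proof. destruct u as [a e], v as [b f], w as [c g]; unfold dmul; simpl;
  f_equal; [destruct e, f; simpl; lia | destruct e, f, g; reflexivity]. Qed.
Lemma dmul1l u : dmul done u = u.
Proof. destruct u as [a e]; unfold dmul; simpl; f_equal. Qed.
Lemma dinv_uniq u v : dmul u v = done -> u = dinv v.
Proof. destruct u as [a e], v as [b f]; unfold dmul, dinv, done; simpl; intro H; inversion H.
  destruct e, f; simpl in *; try discriminate; f_equal; lia. Qed.

Definition img (a : letter) : DD :=
  match fst a with 0 => (0%Z, true) | 1 => (1%Z, true) | _ => done end.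
Definition phiw (w : list letter) : DD := fold_right (fun a acc => dmul (img a) acc) done w.
Definition phi {n} (x : FG n) : DD := phiw (proj1_sig x).

Lemma img_invol a : dmul (img a) (img a) = done.
Proof. unfold img. destruct (fst a) as [|[|k]]; unfold dmul, done; simpl; f_equal. Qed.

Lemma cancels_img a b : cancels a b = true -> img a = img b.
Proof. unfold cancels, img; intro H; apply andb_prop in H as [H _]; apply Nat.eqb_eq in H; rewrite H; auto. Qed.

Lemma phiw_app u v : phiw (u ++ v) = dmul (phiw u) (phiw v).
Proof. induction u; simpl. rewrite dmul1l; auto. rewrite IHu, dmulA; auto. Qed.

Lemma phiw_push a s : phiw (push a s) = dmul (img a) (phiw s).
Proof.
  destruct s as [|b r]; simpl; auto.
  destruct (cancels a b) eqn:C; simpl; auto.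
  rewrite dmulA, (cancels_img a b C), img_invol, dmul1l; auto.
Qed.

Lemma phiw_red w : phiw (red w) = phiw w.
Proof. induction w; simpl; auto. rewrite <- IHw. apply (phiw_push a (red w)). Qed.

Lemma phi_mul n (x y : FG n) : phi (fg_mul x y) = dmul (phi x) (phi y).
Proof. unfold phi. rewrite mul_sig, phiw_red, phiw_app; auto. Qed.

Lemma phi_one n : phi (fg_one n) = done.
Proof. reflexivity. Qed.

Lemma phi_inv n (x : FG n) : phi (fg_inv x) = dinv (phi x).
Proof. apply dinv_uniq. rewrite <- phi_mul, mulVl. reflexivity. Qed.

Lemma phi_comm n (a b : FG n) : phi (fg_comm a b) = dcomm (phi a) (phi b).
Proof. unfold fg_comm, dcomm. rewrite !phi_mul, !phi_inv; auto. Qed.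

Lemma phi_conj n (g x : FG n) : phi (fg_conj g x) = dmul (dmul (dinv (phi g)) (phi x)) (phi g).
Proof. unfold fg_conj. rewrite !phi_mul, !phi_inv; auto. Qed.

Definition Nd {n} (p : Z -> bool) (x : FG n) : bool := negb (snd (phi x)) && p (fst (phi x)).

Lemma Nd_normal n (p : Z -> bool) :
  p 0%Z = true -> (forall a b, p a = true -> p b = true -> p (a + b)%Z = true) ->
  (forall a, p a = true -> p (- a)%Z = true) -> normal_sub n (Nd p).
Proof.
  intros P0 PD PN. unfold Nd.
  assert (E : forall x : FG n, negb (snd (phi x)) && p (fst (phi x)) = true <->
                 exists a, phi x = (a, false) /\ p a = true).
  { intro x. destruct (phi x) as [a e]; simpl. destruct e; simpl; split; intro H.
    discriminate. destruct H as [? [H _]]; discriminate. eauto.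
    destruct H as [b [H1 H2]]; inversion H1; subst; auto. }
  repeat split.
  - apply E. exists 0%Z; split; auto.
  - intros x y Hx Hy. apply E in Hx as [a [Ha Pa]]. apply E in Hy as [b [Hb Pb]].
    apply E. rewrite phi_mul, Ha, Hb. exists (a + b)%Z; split; auto.
  - intros x Hx. apply E in Hx as [a [Ha Pa]]. apply E. rewrite phi_inv, Ha.
    exists (- a)%Z; split; auto.
  - intros g x Hx. apply E in Hx as [a [Ha Pa]]. apply E. rewrite phi_conj, Ha.
    destruct (phi g) as [c e]. destruct e; unfold dmul, dinv; simpl.
    + exists (- a)%Z; split; auto. f_equal; lia.
    + exists a; split; auto. f_equal; lia.
Qed.

Definition pm (m : nat) (a : Z) : bool := Z.eqb (Z.modulo a (2 ^ Z.of_nat m)) 0.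
Definition p0 (a : Z) : bool := Z.eqb a 0.

Lemma pow2_pos m : (0 < 2 ^ Z.of_nat m)%Z.
Proof. apply Z.pow_pos_nonneg; lia. Qed.

Lemma pm_iff m a : pm m a = true <-> (2 ^ Z.of_nat m | a)%Z.
Proof.
  unfold pm. rewrite Z.eqb_eq. apply Z.mod_divide. pose proof (pow2_pos m); lia.
Qed.

Lemma pm_normal n m : normal_sub n (Nd (pm m)).
Proof.
  apply Nd_normal; intros; rewrite ?pm_iff in *.
  - apply Z.divide_0_r.
  - apply Z.divide_add_r; auto.
  - apply Z.divide_opp_r; auto.
Qed.

Lemma p0_normal n : normal_sub n (Nd p0).
Proof.
  apply Nd_normal; unfold p0; intros; rewrite ?Z.eqb_eq in *; auto; lia.
Qed.

Lemma dcomm_props u v : snd (dcomm u v) = false /\ (2 | fst (dcomm u v))%Z /\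
  (snd u = false -> fst (dcomm u v) = 0%Z \/ fst (dcomm u v) = (-2 * fst u)%Z).
Proof.
  destruct u as [a e], v as [b f]; destruct e, f; unfold dcomm, dmul, dinv; cbn [fst snd xorb];
  repeat split; try discriminate; intros;
  first [ exists (b)%Z; lia | exists (a - b)%Z; lia | exists 0%Z; lia | exists (-a)%Z; lia
        | exists (a)%Z; lia | exists (-b)%Z; lia | lia | right; lia | left; lia ].
Qed.

Lemma pow_dvd_le a b : a <= b -> (2 ^ Z.of_nat a | 2 ^ Z.of_nat b)%Z.
Proof.
  intro H. exists (2 ^ Z.of_nat (b - a))%Z. rewrite <- Z.pow_add_r by lia.
  f_equal. lia.
Qed.

Lemma pm_nilp n m : 1 <= m -> nilpotent_class_le n (Nd (pm m)) m.
Proof.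
  intros Hm.
  assert (K : forall i x, lcs n (Nd (pm m)) i x -> i = 0 \/
     (snd (phi x) = false /\ (2 ^ Z.of_nat (Nat.min i m) | fst (phi x))%Z)).
  { induction 1.
    - left; auto.
    - right. unfold Nd in H. destruct (phi x) as [a e]; simpl in *.
      destruct e; simpl in H; [discriminate|]. split; auto.
      apply pm_iff in H. eapply Z.divide_trans; [|exact H]. apply pow_dvd_le. lia.
    - right. rewrite phi_comm. destruct (dcomm_props (phi a) (phi b)) as (H1 & H2 & H3).
      split; auto. destruct IHlcs as [->|[Ha Hd]].
      + replace (Nat.min 1 m) with 1 by lia. exact H2.
      + destruct (H3 Ha) as [ -> | -> ]. apply Z.divide_0_r.
        eapply Z.divide_trans. apply (pow_dvd_le _ (S (Nat.min i m))). lia.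
        replace (Z.of_nat (S (Nat.min i m))) with (Z.succ (Z.of_nat (Nat.min i m))) by lia.
        rewrite Z.pow_succ_r by lia. replace (-2 * fst (phi a))%Z with (2 * (- fst (phi a)))%Z by lia.
        apply Z.mul_divide_mono_l. apply Z.divide_opp_r; auto.
    - destruct IHlcs1 as [->|[Hx Dx]]; [left; auto|]. destruct IHlcs2 as [->|[Hy Dy]]; [left; auto|].
      right. rewrite phi_mul. destruct (phi x) as [a e], (phi y) as [b f]; simpl in *; subst.
      split; auto. apply Z.divide_add_r; auto.
    - destruct IHlcs as [->|[Hx Dx]]; [left; auto|]. right. rewrite phi_inv.
      destruct (phi x) as [a e]; simpl in *; subst. split; auto. apply Z.divide_opp_r; auto. }
  intros x Hx. destruct (K m x Hx) as [->|[H1 H2]]; [lia|].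
  unfold Nd. rewrite H1. simpl. apply pm_iff. rewrite Nat.min_id in H2. auto.
Qed.

Fixpoint xs n (k : nat) : FG n :=
  match k with 0 => gen n 1 | S k => fg_comm (xs n k) (gen n 0) end.

Lemma phi_gen0 n : 0 < n -> phi (gen n 0) = (0%Z, true).
Proof.
  intro H. unfold phi, gen. rewrite nf_sig. reflexivity.
  unfold allv; simpl. destruct n; [lia|reflexivity].
Qed.

Lemma phi_gen1 n : 1 < n -> phi (gen n 1) = (1%Z, true).
Proof.
  intro H. unfold phi, gen. rewrite nf_sig. reflexivity.
  unfold allv; simpl. destruct n as [|[|n]]; [lia|lia|reflexivity].
Qed.

Lemma p0_not_nilp n : 1 < n -> forall k, ~ nilpotent_class_le n (Nd p0) k.
Proof.
  intros Hn k H.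
  assert (Q : forall k, phi (xs n k) = (1%Z, true) \/
                       (snd (phi (xs n k)) = false /\ fst (phi (xs n k)) <> 0%Z)).
  { induction k0 as [|k0 IH]; simpl. left; apply phi_gen1; auto.
    right. rewrite phi_comm, phi_gen0 by lia.
    destruct IH as [->|[H1 H2]].
    - unfold dcomm, dmul, dinv; cbn [fst snd xorb]. split; auto. lia.
    - destruct (phi (xs n k0)) as [a e]; simpl in *; subst.
      unfold dcomm, dmul, dinv; cbn [fst snd xorb]. split; auto. lia. }
  assert (L : lcs n (Nd p0) k (xs n k)).
  { clear H Q. induction k; simpl. constructor. apply lcs_comm; auto. }
  specialize (H _ L). unfold Nd, p0 in H. destruct (Q k) as [E|[H1 H2]].
  - rewrite E in H; discriminate.
  - apply andb_prop in H as [_ H]. apply Z.eqb_eq in H. contradiction.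
Qed.

Lemma conv n (x : FG n) : exists M, forall j, M <= j -> Nd (pm j) x = Nd p0 x.
Proof.
  exists (Z.to_nat (Z.abs (fst (phi x)))). intros j Hj. unfold Nd. f_equal.
  set (v := fst (phi x)) in *. unfold p0.
  destruct (Z.eqb_spec v 0) as [->|Hv].
  - apply pm_iff. apply Z.divide_0_r.
  - destruct (pm j v) eqn:E; auto. apply pm_iff in E. exfalso.
    apply Z.divide_abs_r in E. apply Z.divide_pos_le in E; [|lia].
    pose proof (Z.pow_gt_lin_r 2 (Z.of_nat j) ltac:(lia) ltac:(lia)). lia.
Qed.
Open Scope R_scope.

Lemma least_ex (P : nat -> Prop) : (exists j, P j) -> exists j, P j /\ forall i, (i < j)%nat -> ~ P i.
Proof.
  intros [j Hj]. apply NNPP. intro H.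
  assert (forall k i, (i <= k)%nat -> ~ P i).
  { induction k; intros i Hi Pi.
    - apply H. exists i; split; auto. intros; lia.
    - destruct (Nat.eq_dec i (S k)) as [->|Hne]; [|apply (IHk i); auto; lia].
      apply H. exists (S k); split; auto. intros i' Hi'. apply IHk. lia. }
  apply (H0 j j); auto.
Qed.

Section Top.
Variable n : nat.
Hypothesis Hn : (1 < n)%nat.
Variable Y : Type.
Variable d : Y -> Y -> R.
Hypothesis Hp : polish d.
Hypothesis Hz : zero_dim d.
Variable B : Y -> Prop.
Hypothesis HB : open_in d B.

Definition clopen (U : Y -> Prop) := open_in d U /\ open_in d (fun z => ~ U z).

Definition sq : nat -> option Y := proj1_sig (constructive_indefinite_description _ (proj2 (proj2 Hp))).
Lemma sq_spec : forall y eps, 0 < eps -> exists m z, sq m = Some z /\ d y z < eps.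
Proof. unfold sq. destruct (constructive_indefinite_description _ _) as [s Hs]; simpl; auto. Qed.

Definition rr (k : nat) := / INR (S k).

Definition PropU (m k : nat) (U : Y -> Prop) : Prop :=
  clopen U /\ (forall z, U z -> B z) /\
  match sq m with
  | Some z0 => (exists U', clopen U' /\ (forall z, U' z -> B z) /\ (forall z, d z0 z < rr k -> U' z)) ->
               forall z, d z0 z < rr k -> U z
  | None => True
  end.

Definition Cm m k : Y -> Prop := epsilon (inhabits (fun _ : Y => False)) (PropU m k).

Lemma Cm_spec m k : PropU m k (Cm m k).
Proof.
  unfold Cm. apply epsilon_spec. unfold PropU. destruct (sq m) as [z0|].
  - destruct (classic (exists U', clopen U' /\ (forall z, U' z -> B z) /\ (forall z, d z0 z < rr k -> U' z))) as [[U' HU]|HU].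
    + exists U'. destruct HU as (H1 & H2 & H3). repeat split; auto; apply H1.
    + exists (fun _ => False). repeat split; try tauto.
      * intros y [].
      * intros y _. exists 1; split; [lra|]. auto.
  - exists (fun _ => False). repeat split; try tauto.
    * intros y [].
    * intros y _. exists 1; split; [lra|]. auto.
Qed.

Definition Cj (j : nat) : Y -> Prop := let (m, k) := Cantor.of_nat j in Cm m k.

Lemma Cj_clopen j : clopen (Cj j).
Proof. unfold Cj. destruct (Cantor.of_nat j) as [m k]. apply Cm_spec. Qed.
Lemma Cj_B j z : Cj j z -> B z.
Proof. unfold Cj. destruct (Cantor.of_nat j) as [m k]. apply Cm_spec. Qed.

Lemma dmet : is_metric d.
Proof. apply Hp. Qed.

Lemma cover y : B y -> exists j, Cj j y.
Proof.
  intro By. destruct dmet as (M1 & M2 & M3 & M4).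
  destruct (HB y By) as [eps [He HeB]].
  destruct (Hz y eps He) as [U (HU1 & HU2 & Uy & HUe)].
  destruct (HU1 y Uy) as [del [Hd HdU]].
  destruct (archimed_cor1 (del / 2)) as [N [HN HN0]]; [lra|].
  set (k := pred N). assert (Ek : rr k = / INR N).
  { unfold rr, k. f_equal. f_equal. lia. }
  destruct (sq_spec y (rr k)) as [m [z0 [Hs Hyz]]].
  { unfold rr. apply Rinv_0_lt_compat. apply lt_0_INR. lia. }
  exists (Cantor.to_nat (m, k)). unfold Cj. rewrite Cantor.cancel_of_to.
  destruct (Cm_spec m k) as (_ & _ & H3). rewrite Hs in H3.
  apply H3.
  - exists U. split; [split; auto|split].
    + intros z Uz. apply HeB. apply HUe; auto.
    + intros z Hz0. apply HdU. pose proof (M4 y z0 z). lra.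
  - rewrite M3; auto.
Qed.

Definition mY (y : Y) : nat := epsilon (inhabits 0%nat) (fun j => Cj j y /\ forall i, (i < j)%nat -> ~ Cj i y).

Lemma mY_spec y : B y -> Cj (mY y) y /\ forall i, (i < mY y)%nat -> ~ Cj i y.
Proof.
  intro By. unfold mY. apply epsilon_spec. apply least_ex. apply cover; auto.
Qed.

Lemma mY_uniq y j : Cj j y -> (forall i, (i < j)%nat -> ~ Cj i y) -> mY y = j.
Proof.
  intros H1 H2. destruct (mY_spec y (Cj_B j y H1)) as [H3 H4].
  destruct (lt_eq_lt_dec (mY y) j) as [[L|E]|L]; auto.
  - exfalso; apply (H2 _ L); auto.
  - exfalso; apply (H4 _ L); auto.
Qed.

Lemma avoid M : forall y, (forall j, (j < M)%nat -> ~ Cj j y) ->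
  exists eps, 0 < eps /\ forall z, d y z < eps -> forall j, (j < M)%nat -> ~ Cj j z.
Proof.
  induction M as [|M IH]; intros y Hy.
  - exists 1; split; [lra|]. intros; lia.
  - destruct (IH y) as [e1 [He1 H1]]. { intros; apply Hy; lia. }
    destruct (proj2 (Cj_clopen M) y (Hy M ltac:(lia))) as [e2 [He2 H2]].
    exists (Rmin e1 e2); split. apply Rmin_pos; auto.
    intros z Hz0 j Hj. destruct (Nat.eq_dec j M) as [->|Hne].
    + apply H2. pose proof (Rmin_r e1 e2); lra.
    + apply H1; [pose proof (Rmin_l e1 e2); lra | lia].
Qed.

Definition fY (y : Y) : FG n -> bool :=
  if excluded_middle_informative (B y) then Nd (pm (S (mY y))) else Nd p0.

Lemma fY_cont : continuous_to_G d n fY.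
Proof.
  split.
  - intro y. unfold fY. destruct (excluded_middle_informative (B y)).
    apply pm_normal. apply p0_normal.
  - intros y w. unfold fY at 2. destruct (excluded_middle_informative (B y)) as [By|By].
    + destruct (mY_spec y By) as [H1 H2].
      destruct (proj1 (Cj_clopen (mY y)) y H1) as [e1 [He1 E1]].
      destruct (avoid (mY y) y H2) as [e2 [He2 E2]].
      exists (Rmin e1 e2); split. apply Rmin_pos; auto.
      intros z Hz0. assert (Cz : Cj (mY y) z) by (apply E1; pose proof (Rmin_l e1 e2); lra).
      assert (Az : forall j, (j < mY y)%nat -> ~ Cj j z) by (apply E2; pose proof (Rmin_r e1 e2); lra).
      unfold fY. destruct (excluded_middle_informative (B z)) as [Bz|Bz].
      * rewrite (mY_uniq z (mY y)); auto.
      * exfalso; apply Bz; eapply Cj_B; eauto.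
    + destruct (conv n w) as [M HM].
      destruct (avoid M y) as [e [He E]].
      { intros j _ Cy. apply By. eapply Cj_B; eauto. }
      exists e; split; auto. intros z Hz0. unfold fY.
      destruct (excluded_middle_informative (B z)) as [Bz|Bz]; auto.
      apply HM. destruct (mY_spec z Bz) as [H1 _].
      destruct (le_lt_dec M (mY z)); [lia|]. exfalso. apply (E z Hz0 (mY z)); auto.
Qed.

Lemma fY_iff y : quotient_nilpotent n (fY y) <-> B y.
Proof.
  unfold fY. destruct (excluded_middle_informative (B y)) as [By|By]; split; intro H; auto.
  - exists (S (mY y)). apply pm_nilp. lia.
  - destruct H as [k Hk]. exfalso. apply (p0_not_nilp n Hn k Hk).
  - contradiction.
Qed.
End Top.

Lemma open_nilp n : open_G n (fun N => quotient_nilpotent n N).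
Proof.
  intros N HN [k Hk]. destruct (open_class n k N HN Hk) as [L HL].
  exists L. intros N' HN' Hag. exists k. apply HL; auto.
Qed.

Theorem mainTheorem9 (n : nat) (Hn : (1 < n)%nat) :
  (forall k : nat, (1 <= k)%nat ->
     clopen_G n (fun N => nilpotent_class_le n N k)) /\
  Sigma01_complete_G n (fun N => quotient_nilpotent n N).
Proof.
  split.
  - intros k _. split. apply open_class. apply open_not_class.
  - split. apply open_nilp.
    intros Y d Hp Hz B HB. exists (fY n Y d Hp B). split.
    + apply fY_cont; auto.
    + intro y. apply fY_iff; auto.
Qed.
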